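(* For all integers $n \geq 3$ and $k \geq 4$, $h(n,k) \geq n$.
   Context: All graphs are finite and simple. A degree monotone path in a graph $G$ is a path $v_1v_2\ldots v_m$ such that $\deg(v_1)\le \cdots\le \deg(v_m)$ or $\deg(v_1)\ge \cdots\ge \deg(v_m)$; its length is its number of vertices. $mp(G)$ denotes the maximum length of a degree monotone path in $G$. For a pair $e$ of non-adjacent vertices, $G+e$ is $G$ with the edge $e$ added. A graph $G$ is $k$-saturated if $mp(G)\le k-1$ and $mp(G+e)\ge k$ for every pair $e$ of non-adjacent vertices of $G$ (so $K_m$ is $k$-saturated for $m\le k-1$). $h(n,k)$ is the minimum number of edges of a $k$-saturated graph on $n$ vertices. *)

(* Defs.v *)
(* A simple graph on n vertices = symmetric irreflexive
   boolean relation on 'I_n. *)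
From mathcomp Require Import all_boot.
Set Implicit Arguments. Unset Strict Implicit. Unset Printing Implicit Defensive.

Section Graphs.
Variable T : finType.

Definition simple_graph (g : rel T) : Prop := symmetric g /\ irreflexive g.

Definition deg (g : rel T) (x : T) : nat := #|[set y | g x y]|.

Definition nedges (g : rel T) : nat :=
  #|[set p : {set T} | [exists x, exists y, (x != y) && g x y && (p == [set x; y])]]|.

Definition add_edge (g : rel T) (u v : T) : rel T :=
  fun x y => [|| g x y, (x == u) && (y == v) | (x == v) && (y == u)].

(* a path: nonempty sequence of pairwise distinct vertices, consecutive
   ones adjacent; its length is its number of vertices (size p) *)
Definition is_gpath (g : rel T) (p : seq T) : bool :=
  match p with
  | [::] => false
  | x :: s => uniq (x :: s) && path g x s
  end.

Definition deg_monotone_path (g : rel T) (p : seq T) : bool :=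
  is_gpath g p &&
  (sorted (fun a b => deg g a <= deg g b) p ||
   sorted (fun a b => deg g b <= deg g a) p).

Definition k_saturated (g : rel T) (k : nat) : Prop :=
  (forall p, deg_monotone_path g p -> size p <= k.-1) /\
  (forall u v, u != v -> ~~ g u v ->
     exists p, deg_monotone_path (add_edge g u v) p /\ k <= size p).

End Graphs.

(* Main.v *)
Require Import Defs.
From mathcomp Require Import all_boot zify.
From Stdlib Require Import Classical.
Set Implicit Arguments. Unset Strict Implicit. Unset Printing Implicit Defensive.

Section S.
Variable T : finType.

Definition fpth (r : rel T) (f : nat -> T) (s : nat) :=
  (forall i j, i < s -> j < s -> f i = f j -> i = j) /\
  (forall i, i.+1 < s -> r (f i) (f i.+1)).
Definition fmono (d : T -> nat) (f : nat -> T) s :=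
  forall i, i.+1 < s -> d (f i) <= d (f i.+1).

Lemma is_gpathE (g : rel T) p : is_gpath g p = [&& p != [::], uniq p & sorted g p].
Proof. by case: p. Qed.

Lemma to_seq g f s : fpth g f s -> fmono (deg g) f s -> 0 < s ->
  deg_monotone_path g (mkseq f s) /\ size (mkseq f s) = s.
Proof.
move=> [fi fa] fm s0; rewrite size_mkseq; split=> //.
have x0 := f 0.
rewrite /deg_monotone_path is_gpathE.
apply/andP; split; last first.
  apply/orP; left; apply/(sortedP x0) => i; rewrite size_mkseq => lt.
  by rewrite !nth_mkseq //; [apply: fm | lia].
apply/and3P; split.
- by rewrite -size_eq0 size_mkseq; lia.
- apply/(uniqP x0) => i j; rewrite !inE size_mkseq => li lj.
  by rewrite !nth_mkseq //; apply: fi.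
- apply/(sortedP x0) => i; rewrite size_mkseq => lt.
  by rewrite !nth_mkseq //; [apply: fa | lia].
Qed.

Lemma of_seq g p : symmetric g -> deg_monotone_path g p ->
  exists f, fpth g f (size p) /\ fmono (deg g) f (size p).
Proof.
move=> gs /andP[]; rewrite is_gpathE => /and3P[pn pu ps] /orP[] pm.
  case: p pn pu ps pm => // x0 p' _ pu ps pm.
  exists (nth x0 (x0 :: p')); split; last by move=> i; move/(sortedP x0): pm; apply.
  split; last by move=> i; move/(sortedP x0): ps; apply.
  by move=> i j li lj; move/(uniqP x0): pu; apply.
case: p pn pu ps pm => // x0 p' _ pu ps pm.
set p := x0 :: p' in pu ps pm *.
exists (nth x0 (rev p)); rewrite -(size_rev p); split; last first.
  have: sorted (fun a b => deg g a <= deg g b) (rev p) by rewrite rev_sorted.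
  by move/(sortedP x0).
split; last first.
  have: sorted g (rev p).
    by rewrite rev_sorted (@eq_sorted _ _ g) // => a b; apply: gs.
  by move/(sortedP x0).
have: uniq (rev p) by rewrite rev_uniq.
by move/(uniqP x0) => H i j li lj; apply: H.
Qed.
End S.


Section D.
Variable T : finType.
Implicit Types (g : rel T) (x y a b c u v : T).

Lemma deg_nbr1 g x w y : deg g x = 1 -> g x w -> g x y -> y = w.
Proof.
rewrite /deg => /eqP/cards1P[z hz] hw hy.
have: w \in [set y | g x y] by rewrite inE.
have: y \in [set y | g x y] by rewrite inE.
by rewrite hz !inE => /eqP-> /eqP->.
Qed.

Lemma deg_ge2 g x a b : g x a -> g x b -> a != b -> 2 <= deg g x.
Proof.
move=> ha hb ab; rewrite /deg.
have sub : [set a; b] \subset [set y | g x y].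
  by apply/subsetP=> y; rewrite !inE => /orP[]/eqP->.
by move: (subset_leq_card sub); rewrite cards2 ab.
Qed.

Lemma deg_ge3 g x a b c : g x a -> g x b -> g x c -> a != b -> a != c -> b != c ->
  3 <= deg g x.
Proof.
move=> ha hb hc ab ac bc; rewrite /deg.
have sub : [set a; b; c] \subset [set y | g x y].
  by apply/subsetP=> y; rewrite !inE => /orP[/orP[]|]/eqP->.
move: (subset_leq_card sub); rewrite [[set a; b; c]]setUC cardsU1 cards2 ab !inE.
by rewrite (eq_sym c a) (negbTE ac) (eq_sym c b) (negbTE bc).
Qed.

Lemma deg_two g x a b y : deg g x = 2 -> g x a -> g x b -> a != b -> g x y ->
  y = a \/ y = b.
Proof.
move=> d2 ha hb ab hy.
have sub : [set a; b] \subset [set y | g x y].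
  by apply/subsetP=> z; rewrite !inE => /orP[]/eqP->.
have: [set a; b] == [set y | g x y].
  by rewrite eqEcard sub /= cards2 ab; move: d2; rewrite /deg => ->.
move/eqP=> e; have: y \in [set y | g x y] by rewrite inE.
by rewrite -e !inE => /orP[]/eqP->; [left|right].
Qed.

Lemma deg_other g x a : 2 <= deg g x -> exists y, g x y /\ y != a.
Proof.
move=> d2.
have: 0 < #|[set y | g x y] :\ a|.
  by move: (cardsD1 a [set y | g x y]); rewrite /deg in d2; case: (a \in _) => /=; lia.
by case/card_gt0P=> y; rewrite !inE => /andP[ya gy]; exists y.
Qed.

Lemma deg_pos g x a : g x a -> 0 < deg g x.
Proof. by move=> h; apply/card_gt0P; exists a; rewrite inE. Qed.

Lemma deg0 g x y : deg g x = 0 -> ~~ g x y.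
Proof. by move=> d; apply/negP=> h; move: (deg_pos h); rewrite d. Qed.

Lemma add_edgeE g u v x y :
  add_edge g u v x y = [|| g x y, (x == u) && (y == v) | (x == v) && (y == u)].
Proof. by []. Qed.

Lemma add_edge_sym g u v : symmetric g -> symmetric (add_edge g u v).
Proof.
move=> gs x y; rewrite !add_edgeE gs.
by case: (g y x); case: (x == u); case: (x==v); case: (y==u); case: (y==v).
Qed.

Lemma add_edge_irr g u v : irreflexive g -> u != v -> irreflexive (add_edge g u v).
Proof.
move=> gi uv x; rewrite add_edgeE gi /=.
by apply/negP=> /orP[]/andP[/eqP-> /eqP e]; move: uv; rewrite e eqxx.
Qed.

Lemma add_edge_other g u v x y : x != u -> x != v -> add_edge g u v x y = g x y.
Proof. by move=> xu xv; rewrite add_edgeE (negbTE xu) (negbTE xv) !orbF. Qed.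

Lemma add_edge_other2 g u v x y : y != u -> y != v -> add_edge g u v x y = g x y.
Proof. by move=> yu yv; rewrite add_edgeE (negbTE yu) (negbTE yv) !andbF !orbF. Qed.

Lemma deg_add_other g u v x : x != u -> x != v -> deg (add_edge g u v) x = deg g x.
Proof.
move=> xu xv; rewrite /deg; apply: eq_card => y.
by rewrite !inE add_edge_other.
Qed.

Lemma deg_add_u g u v : u != v -> ~~ g u v -> deg (add_edge g u v) u = (deg g u).+1.
Proof.
move=> uv nuv; rewrite /deg.
have -> : [set y | add_edge g u v u y] = v |: [set y | g u y].
  apply/setP=> y; rewrite !inE add_edgeE eqxx /= (negbTE uv) /= orbF orbC.
  by [].
by rewrite cardsU1 inE (negbTE nuv).
Qed.

Lemma deg_add_v g u v : symmetric g -> u != v -> ~~ g u v ->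
  deg (add_edge g u v) v = (deg g v).+1.
Proof.
move=> gs uv nuv; rewrite /deg.
have -> : [set y | add_edge g u v v y] = u |: [set y | g v y].
  apply/setP=> y; rewrite !inE add_edgeE eqxx /= eq_sym (negbTE uv) /= orbC.
  by [].
by rewrite cardsU1 inE gs (negbTE nuv).
Qed.

Lemma add_edge_sub g u v x y : g x y -> add_edge g u v x y.
Proof. by rewrite add_edgeE => ->. Qed.

End D.


Section G.
Variable T : finType.
Variable g : rel T.
Variable k : nat.
Hypothesis gs : symmetric g.
Hypothesis gi : irreflexive g.
Hypothesis Hmp : forall p, deg_monotone_path g p -> size p <= k.-1.

Lemma mp_f f s : fpth g f s -> fmono (deg g) f s -> s <= k.-1.
Proof.
move=> P M; case: s P M => [|s] P M; first by [].
by case: (to_seq P M) => // h <-; apply: Hmp.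
Qed.

Lemma mono_trans (d : T -> nat) f s i j : fmono d f s -> i <= j -> j < s -> d (f i) <= d (f j).
Proof.
move=> M ij js; elim: j ij js => [|j IH] ij js.
  by move: ij; rewrite leqn0 => /eqP->.
case: (ltngtP i j.+1) ij => // [ij _|-> _]; last by [].
apply: leq_trans (IH _ _) (M _ js) => //; lia.
Qed.

Lemma interior2 (r : rel T) f s i : symmetric r -> fpth r f s -> 0 < i -> i.+1 < s ->
  2 <= deg r (f i).
Proof.
move=> rs [fi fa] i0 il.
apply: (@deg_ge2 _ r (f i) (f i.-1) (f i.+1)).
- rewrite rs; have := fa i.-1; rewrite prednK //; apply; lia.
- by apply: fa.
- apply/eqP=> e; have := fi _ _ _ _ e; lia.
Qed.

Section Res.
Variables u z : T.
Hypothesis uz : u != z.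
Hypothesis nuz : ~~ g u z.
Hypothesis loc : forall y, g z y -> deg g y <= deg g z.
Hypothesis lt_uz : deg g u < deg g z.
Hypothesis du1 : deg g u <= 1.
Local Notation g' := (add_edge g u z).

Lemma Gres f s : fpth g' f s -> fmono (deg g') f s -> k <= s -> 4 <= k ->
  exists j, [/\ k - 2 <= j, fpth g f j, fmono (deg g) f j,
     (forall i, i < j -> f i != u /\ deg g (f i) <= (deg g u).+1) & g u (f j.-1)].
Proof.
move=> [fi fa] M ks k4.
have zu : z != u by rewrite eq_sym.
have dz : deg g' z = (deg g z).+1 by apply: deg_add_v.
have du : deg g' u = (deg g u).+1 by apply: deg_add_u.
have dx : forall x, x != u -> x != z -> deg g' x = deg g x.
  by move=> x xu xz; apply: deg_add_other.
have zlast : forall i, i.+1 < s -> f i != z.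
  move=> i il; apply/eqP=> fz.
  have e := fa i il; have m := M i il; rewrite fz in e m.
  have yz : f i.+1 != z by apply/eqP=> e'; rewrite -e' in fz; have := fi _ _ _ _ fz; lia.
  case: (eqVneq (f i.+1) u) => [yu|yu].
    by move: m; rewrite yu dz du; lia.
  have gzy : g z (f i.+1) by move: e; rewrite add_edge_other2.
  by move: m (loc gzy); rewrite dz dx //; lia.
have step : forall i, i.+1 < s -> f i != u -> f i.+1 != u ->
    g (f i) (f i.+1) /\ deg g (f i) <= deg g (f i.+1).
  move=> i il a b; split.
    by move: (fa i il); rewrite add_edgeE (negbTE a) (negbTE b) /= andbF !orbF.
  have fiz := zlast i il.
  case: (eqVneq (f i.+1) z) => [e|ne].
    by rewrite e; apply: loc; rewrite gs -e; move: (fa i il); rewrite add_edge_other.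
  by move: (M i il); rewrite !dx.
have transfer : (forall i, i.+1 < s -> g (f i) (f i.+1) /\ deg g (f i) <= deg g (f i.+1)) -> False.
  move=> H.
  have : s <= k.-1.
    apply: (@mp_f f s); [split; [exact: fi | by move=> i il; case: (H i il)] | by move=> i il; case: (H i il)].
  lia.
case: (classic (exists j, j < s /\ f j = u)) => [[j [js fj]]|nou]; last first.
  exfalso; apply: transfer => i il; apply: step => //; apply/eqP=> e; apply: nou.
    by exists i; split=> //; lia.
  by exists i.+1.
have other : forall i, i < s -> i != j -> f i != u.
  by move=> i il ij; apply/eqP=> e; rewrite -fj in e; move: (fi _ _ il js e) ij => ->; rewrite eqxx.
case: j js fj other => [|j] js fj other.
  exfalso.
  have f1z : f 1 != z by apply: zlast; lia.
  have f1u : f 1 != u by apply: other; lia.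
  have g01 : g u (f 1) by move: (fa 0 ltac:(lia)); rewrite fj add_edge_other2.
  apply: transfer => i il; case: i il => [|i] il.
    split; first by rewrite fj.
    by move: (M 0 il); rewrite fj du dx //; lia.
  by apply: step => //; apply: other => //; lia.
have q := f j.
have qz : f j != z by apply: zlast.
have qu : f j != u by apply: other => //; lia.
have gqu : g u (f j).
  by rewrite gs; move: (fa j js); rewrite fj add_edge_other.
have sj : s <= j.+3.
  case: (ltnP j.+2 s) => h; last lia.
  have yu : f j.+2 != u by apply: other => //; lia.
  case: (eqVneq (f j.+2) z) => [yz|yz].
    case: (ltnP j.+3 s) => h' //; by move: (zlast _ h'); rewrite yz eqxx.
  have guy : g u (f j.+2) by move: (fa j.+1 h); rewrite fj add_edge_other2.
  have d1 : deg g u = 1 by move: (deg_pos guy) du1; lia.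
  have := deg_nbr1 d1 gqu guy => e.
  by move: (fi _ _ h (ltnW js) e); lia.
exists j.+1; split.
- lia.
- split; first by move=> a b ha hb; apply: fi; lia.
  by move=> i il; case: (step i ltac:(lia)) => //; apply: other; lia.
- by move=> i il; case: (step i ltac:(lia)) => //; apply: other; lia.
- move=> i il; split; first by apply: other; lia.
  rewrite -dx; first (rewrite -du; have := mono_trans M (_ : i <= j.+1) js; rewrite fj; apply; lia).
    by apply: other; lia.
  by apply: zlast; lia.
- by [].
Qed.
End Res.
End G.


Section P.
Variable T : finType.

Lemma mem_mkseqP (f : nat -> T) s x : reflect (exists2 i, i < s & x = f i) (x \in mkseq f s).
Proof.
apply: (iffP mapP) => [[i]|[i]]; rewrite ?mem_iota => hi ->; exists i => //.
by rewrite mem_iota.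
Qed.

Lemma uniq_mkseq (f : nat -> T) s : (forall i j, i < s -> j < s -> f i = f j -> i = j) ->
  uniq (mkseq f s).
Proof.
case: s => [|s] fi //; apply/(uniqP (f 0)) => i j; rewrite !inE size_mkseq => hi hj.
by rewrite !nth_mkseq //; apply: fi.
Qed.

Lemma inj_bound (f c : nat -> T) s L : (forall i j, i < s -> j < s -> f i = f j -> i = j) ->
  (forall i, i < s -> exists2 j, j < L & f i = c j) -> s <= L.
Proof.
move=> fi fc; have := uniq_leq_size (uniq_mkseq fi) (s2 := mkseq c L).
rewrite !size_mkseq; apply=> x /mem_mkseqP[i hi ->].
by case: (fc i hi) => j hj ->; apply/mem_mkseqP; exists j.
Qed.

Lemma inj_surj (f c : nat -> T) s L : (forall i j, i < s -> j < s -> f i = f j -> i = j) ->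
  (forall i, i < s -> exists2 j, j < L & f i = c j) -> L <= s ->
  forall j, j < L -> exists2 i, i < s & c j = f i.
Proof.
move=> fi fc Ls j hj.
have sub : {subset mkseq f s <= mkseq c L}.
  by move=> x /mem_mkseqP[i hi ->]; case: (fc i hi) => j' hj' ->; apply/mem_mkseqP; exists j'.
have [_ e] := uniq_min_size (uniq_mkseq fi) sub (ltac:(by rewrite !size_mkseq)).
have : c j \in mkseq c L by apply/mem_mkseqP; exists j.
by rewrite -e => /mem_mkseqP.
Qed.

Lemma pclosure (r : rel T) (S : T -> Prop) f s i0 : symmetric r -> fpth r f s ->
  (forall x y, S x -> r x y -> S y) -> i0 < s -> S (f i0) -> forall i, i < s -> S (f i).
Proof.
move=> rs [fi fa] cl hi0 S0.
have fw : forall d, i0 + d < s -> S (f (i0 + d)).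
  elim=> [|d IH] h; first by rewrite addn0.
  apply: (cl (f (i0 + d))); first by apply: IH; lia.
  by rewrite addnS; apply: fa; lia.
have bw : forall d, d <= i0 -> S (f (i0 - d)).
  elim=> [|d IH] h; first by rewrite subn0.
  apply: (cl (f (i0 - d))); first by apply: IH; lia.
  have -> : i0 - d = (i0 - d.+1).+1 by lia.
  by rewrite rs; apply: fa; lia.
move=> i hi; case: (leqP i0 i) => h.
  by have := fw (i - i0); rewrite subnKC //; apply.
by have := bw (i0 - i); rewrite subKn ?(ltnW h) //; apply; lia.
Qed.

Variable g : rel T.
Variable k : nat.
Hypothesis gs : symmetric g.
Hypothesis gi : irreflexive g.
Hypothesis Hmp : forall p, deg_monotone_path g p -> size p <= k.-1.
Hypothesis Hsat : forall u v, u != v -> ~~ g u v ->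
     exists p, deg_monotone_path (add_edge g u v) p /\ k <= size p.
Hypothesis k4 : 4 <= k.

Lemma sat_f u v : u != v -> ~~ g u v ->
  exists f s, [/\ fpth (add_edge g u v) f s, fmono (deg (add_edge g u v)) f s & k <= s].
Proof.
move=> uv nuv; case: (Hsat uv nuv) => p [dp kp].
case: (of_seq (add_edge_sym u v gs) dp) => f [P M].
by exists f, (size p).
Qed.

Lemma avoid u v f s : u != v -> ~~ g u v -> fpth (add_edge g u v) f s ->
  fmono (deg (add_edge g u v)) f s ->
  (forall i, i < s -> f i != u /\ f i != v) -> s <= k.-1.
Proof.
move=> uv nuv [fi fa] M av; apply: (mp_f Hmp); first split; first exact: fi.
  by move=> i hi; case: (av i (ltnW hi)) => a b; move: (fa i hi); rewrite add_edge_other.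
move=> i hi; case: (av i (ltnW hi)) => a b; case: (av i.+1 hi) => a' b'.
by move: (M i hi); rewrite !deg_add_other.
Qed.

End P.


Section PCs.
Variable T : finType.
Variable g : rel T.
Variable k : nat.
Hypothesis gs : symmetric g.
Hypothesis gi : irreflexive g.
Hypothesis Hmp : forall p, deg_monotone_path g p -> size p <= k.-1.
Hypothesis Hsat : forall u v, u != v -> ~~ g u v ->
     exists p, deg_monotone_path (add_edge g u v) p /\ k <= size p.
Hypothesis k4 : 4 <= k.

Lemma PC c L : 3 <= L -> fpth g c L -> deg g (c 0) = 1 -> deg g (c L.-1) = 1 ->
  (forall i, 0 < i -> i.+1 < L -> deg g (c i) = 2) -> False.
Proof.
move=> L3 [ci ca] d0 dL dI.
have cne : forall i j, i < L -> j < L -> i != j -> c i != c j.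
  by move=> i j hi hj; apply: contra => /eqP e; apply/eqP; apply: ci.
have gLL : g (c L.-2) (c L.-1).
  have e : L.-1 = L.-2.+1 by lia.
  by rewrite e; apply: ca; lia.
have cl : forall j, j < L -> forall y, g (c j) y -> exists2 j', j' < L & y = c j'.
  move=> j hj y hy.
  case: (posnP j) => [j0|jp].
    by exists 1; [lia | rewrite j0 in hy; exact: (deg_nbr1 d0 (ca 0 ltac:(lia)) hy)].
  case: (ltnP j.+1 L) => jL.
    have h1 : g (c j) (c j.-1) by rewrite gs; have := ca j.-1; rewrite prednK //; apply; lia.
    have h2 : g (c j) (c j.+1) by apply: ca.
    case: (deg_two (dI _ jp jL) h1 h2 _ hy).
    - by apply: cne; lia.
    - by move=> ->; exists j.-1 => //; lia.
    - by move=> ->; exists j.+1.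
  have ej : j = L.-1 by lia.
  exists L.-2; first lia.
  rewrite ej in hy; apply: (deg_nbr1 dL _ hy).
  by rewrite gs.
have dle2 : forall j, j < L -> deg g (c j) <= 2.
  move=> j hj; case: (posnP j) => [->|jp]; first by rewrite d0.
  case: (ltnP j.+1 L) => jL; first by rewrite dI.
  have -> : j = L.-1 by lia.
  by rewrite dL.
case: (ltnP k L) => kL.
  have : L.-1 <= k.-1; last lia.
  apply: (mp_f Hmp); first split.
  - by move=> i j hi hj; apply: ci; lia.
  - by move=> i hi; apply: ca; lia.
  - move=> i hi; rewrite (dI i.+1) //; last lia.
    by apply: dle2; lia.
have allin : forall m, 2 <= m -> m < L -> exists f s,
   [/\ fpth (add_edge g (c 0) (c m)) f s, fmono (deg (add_edge g (c 0) (c m))) f s, k <= s,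
       s <= L & forall i, i < s -> exists2 j, j < L & f i = c j].
  move=> m m2 mL.
  have ab : c 0 != c m by apply: cne; lia.
  have nab : ~~ g (c 0) (c m).
    apply/negP=> h; have e := deg_nbr1 d0 (ca 0 ltac:(lia)) h.
    by move: (ci m 1 mL ltac:(lia) e); lia.
  case: (sat_f gs Hsat ab nab) => f [s [P M ks]].
  have fin : forall i, i < s -> exists2 j, j < L & f i = c j.
    case: (classic (exists i0, i0 < s /\ exists2 j, j < L & f i0 = c j)) => [[i0 [hi0 S0]]|none].
      apply: (pclosure (S := fun x => exists2 j, j < L & x = c j) (add_edge_sym _ _ gs) P) hi0 S0.
      move=> x y [j hj ->]; rewrite add_edgeE => /orP[|/orP[]] /=.
      - by apply: cl.
      - by case/andP=> _ /eqP->; exists m.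
      - by case/andP=> _ /eqP->; exists 0; [lia|].
    exfalso.
    have : s <= k.-1; last lia.
    apply: (avoid Hmp ab nab P M) => i hi; split; apply/eqP=> e; apply: none; exists i; split=> //.
      by exists 0; [lia|].
    by exists m.
  exists f, s; split => //.
  by case: P => fi _; apply: (inj_bound fi fin).
case: (ltnP L k) => Lk.
  case: (allin L.-1 ltac:(lia) ltac:(lia)) => f [s [_ _ ks sL _]]; lia.
have eL : L = k by lia.
case: (allin L.-2 ltac:(lia) ltac:(lia)) => f [s [[fi fa] M ks sL fin]].
set g' := add_edge g (c 0) (c L.-2) in fi fa M.
have c0m : c 0 != c L.-2 by apply: cne; lia.
have n0m : ~~ g (c 0) (c L.-2).
  apply/negP=> h; have e := deg_nbr1 d0 (ca 0 ltac:(lia)) h.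
  by move: (ci L.-2 1 ltac:(lia) ltac:(lia) e); lia.
have dlast : deg g' (c L.-1) = 1.
  by rewrite /g' deg_add_other // ; apply: cne; lia.
have dm : deg g' (c L.-2) = 3 by rewrite /g' deg_add_v // dI //; lia.
have dge : forall j, j < L -> j != L.-1 -> 2 <= deg g' (c j).
  move=> j hj jn; case: (posnP j) => [->|jp]; first by rewrite /g' deg_add_u // d0.
  case: (eqVneq j L.-2) => [->|jm]; first by rewrite dm.
  rewrite /g' deg_add_other ?dI //; try lia; apply: cne; lia.
have dle : forall j, j < L -> j != L.-2 -> deg g' (c j) <= 2.
  move=> j hj jn; case: (posnP j) => [->|jp]; first by rewrite /g' deg_add_u // d0.
  case: (eqVneq j L.-1) => [->|jm]; first by rewrite dlast.
  rewrite /g' deg_add_other ?dI //; try lia; apply: cne; lia.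
case: (inj_surj fi fin ltac:(lia) (j := L.-1) ltac:(lia)) => i hi ei.
have i0 : i = 0.
  case: (posnP i) => // ip; exfalso.
  case: (fin i.-1 ltac:(lia)) => j hj ej.
  have := M i.-1; rewrite prednK // => /(_ hi); rewrite -ei dlast ej.
  have : j != L.-1.
    apply/eqP=> e; rewrite e ei in ej; move: (fi i.-1 i ltac:(lia) hi ej); lia.
  by move/(dge j hj); lia.
have f1 : f 1 = c L.-2.
  rewrite i0 in ei.
  have h := fa 0 ltac:(lia); rewrite -ei /g' add_edge_other in h; try (apply: cne; lia).
  by apply: (deg_nbr1 dL _ h); rewrite gs.
case: (fin 2 ltac:(lia)) => j hj ej.
have : j != L.-2.
  by apply/eqP=> e; rewrite e -f1 in ej; move: (fi 2 1 ltac:(lia) ltac:(lia) ej).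
move/(dle j hj); move: (M 1 ltac:(lia)); rewrite f1 ej dm; lia.
Qed.
End PCs.


Section ML.
Variable T : finType.
Variable g : rel T.
Variable k : nat.
Hypothesis gs : symmetric g.
Hypothesis gi : irreflexive g.
Hypothesis Hmp : forall p, deg_monotone_path g p -> size p <= k.-1.
Hypothesis Hsat : forall u v, u != v -> ~~ g u v ->
     exists p, deg_monotone_path (add_edge g u v) p /\ k <= size p.
Hypothesis k4 : 4 <= k.

Lemma ML u w z : deg g u = 1 -> g u w -> (forall y, g z y -> deg g y <= deg g z) ->
  2 <= deg g z -> z != w -> False.
Proof.
move=> d1 guw loc dz zw.
have uz : u != z by apply/eqP=> e; move: dz; rewrite -e d1.
have nuz : ~~ g u z.
  by apply/negP=> h; move: zw; rewrite (deg_nbr1 d1 guw h) eqxx.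
case: (sat_f gs Hsat uz nuz) => f [s [P M ks]].
case: (Gres gs Hmp uz nuz loc ltac:(lia) ltac:(lia) P M ks k4) => j [kj [fi fa] Mj bnd gq].
have fw : f j.-1 = w by apply: (deg_nbr1 d1 guw gq).
pose h i := if i == 0 then u else f (j - i).
have h0 : h 0 = u by [].
have hS : forall i, 0 < i -> h i = f (j - i) by move=> i ip; rewrite /h ifN // -lt0n.
clearbody h.
have hi : forall a b, a <= j -> b <= j -> h a = h b -> a = b.
  move=> a b ha hb; case: (posnP a) => [->|ap]; case: (posnP b) => [->|bp] //.
  - rewrite h0 hS // => e; have := bnd (j - b) ltac:(lia); rewrite -e eqxx; by case.
  - rewrite h0 hS // => e; have := bnd (j - a) ltac:(lia); rewrite e eqxx; by case.
  - by rewrite !hS // => e; have := fi (j - a) (j - b) ltac:(lia) ltac:(lia) e; lia.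
have ha : forall i, i < j -> g (h i) (h i.+1).
  move=> i ij; case: (posnP i) => [->|ip]; first by rewrite h0 hS // subn1.
  rewrite !hS // gs; have e : j - i = (j - i.+1).+1 by lia.
  by rewrite e; apply: fa; lia.
have hP : fpth g h j.+1.
  split; first by move=> a b ha' hb' e; apply: hi => //; lia.
  by move=> i hi'; apply: ha; lia.
have hle : forall i, 0 < i -> i <= j -> deg g (h i) <= 2.
  by move=> i ip ij; rewrite hS //; case: (bnd (j - i) ltac:(lia)) => _; rewrite d1.
have hint : forall i, 0 < i -> i < j -> deg g (h i) = 2.
  move=> i ip ij; have := interior2 gs hP ip ltac:(lia); have := hle i ip ltac:(lia); lia.
have j2 : 2 <= j by lia.
have gjj : g (h j) (h j.-1) by rewrite gs; have := ha j.-1; rewrite prednK; [apply|]; lia.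
have dj1 : 1 <= deg g (h j) by apply: (deg_pos gjj).
have dj2 : deg g (h j) <= 2 by apply: hle; lia.
have dh0 : deg g (h 0) = 1 by rewrite h0.
case: (ltnP 1 (deg g (h j))) => dj; last first.
  apply: (PC gs Hmp Hsat k4 (c := h) (L := j.+1)).
  - lia.
  - exact: hP.
  - exact: dh0.
  - by rewrite /=; lia.
  - by move=> i ip il; apply: hint; lia.
have [y [gy yn]] := deg_other (h j.-1) dj.
have ynot : forall i, i <= j -> y != h i.
  move=> i ij; apply/eqP=> e.
  case: (ltngtP i j) => [ilt|igt|ie]; [|lia|by move: gy; rewrite e ie gi].
  case: (eqVneq i j.-1) => [ie|ine]; first by move: yn; rewrite e ie eqxx.
  case: (posnP i) => [i0|ip].
    rewrite i0 h0 in e; rewrite e gs in gy.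
    have := deg_nbr1 d1 guw gy; rewrite -fw -[j.-1]subn1 -hS; last lia.
    move=> e'; have ej := hi j 1 (leqnn j) (ltnW j2) e'.
    by move: j2; rewrite ej.
  have h1 : g (h i) (h i.-1) by rewrite gs; have := ha i.-1; rewrite prednK; [apply|]; lia.
  have h2 : g (h i) (h i.+1) by apply: ha.
  have h3 : g (h i) (h j) by rewrite gs -e.
  case: (deg_two (hint i ip ilt) h1 h2 _ h3).
  - apply/eqP=> e'; have := hi i.-1 i.+1 (leq_trans (leq_pred i) ij) ilt e'.
    by clear -ip; lia.
  - move=> e'; have := hi j i.-1 (leqnn _) (leq_trans (leq_pred i) ij) e'.
    by clear -ip ilt; lia.
  - move=> e'; have := hi j i.+1 (leqnn _) ilt e'.
    by move=> ee; move: ine; rewrite ee /=; clear; rewrite eqxx.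
pose h' i := if i == j.+1 then y else h i.
have h'S : forall i, i <= j -> h' i = h i.
  by move=> i ij; rewrite /h' ifN //; apply/eqP=> ee; move: ij; rewrite ee ltnn.
have h'j : h' j.+1 = y by rewrite /h' eqxx.
clearbody h'.
have hv : forall c, c < j.+2 -> c != j.+1 -> c <= j by move=> c c1 c2; clear -c1 c2; lia.
have h'P : fpth g h' j.+2.
  split.
    move=> a b ha' hb'.
    case: (eqVneq a j.+1) => [-> | an]; case: (eqVneq b j.+1) => [-> | bn] //.
    - rewrite h'j (h'S b (hv b hb' bn)) => e.
      by move: (ynot b (hv b hb' bn)); rewrite e eqxx.
    - rewrite h'j (h'S a (hv a ha' an)) => e.
      by move: (ynot a (hv a ha' an)); rewrite -e eqxx.
    - rewrite (h'S a (hv a ha' an)) (h'S b (hv b hb' bn)); apply: hi; exact: hv.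
  move=> i il.
  case: (eqVneq i j) => [->|ne]; first by rewrite h'j h'S.
  have ij : i < j by clear -il ne; lia.
  by rewrite (h'S i (ltnW ij)) (h'S i.+1 ij); apply: ha.
have dy1 : 1 <= deg g y by apply: (deg_pos (a := h j)); rewrite gs.
case: (ltnP 1 (deg g y)) => dy; last first.
  apply: (PC gs Hmp Hsat k4 (c := h') (L := j.+2)).
  - by clear -j2; lia.
  - exact: h'P.
  - by rewrite h'S.
  - by rewrite /= h'j; clear -dy dy1; lia.
  - move=> i ip il; rewrite h'S; last by clear -il; lia.
    case: (eqVneq i j) => [->|ne]; first by clear -dj dj2; lia.
    by apply: hint => //; clear -il ne; lia.
have : j.+2 <= k.-1; last by clear -kj k4; lia.
apply: (mp_f Hmp h'P) => i il.
have ij : i <= j by clear -il; lia.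
case: (eqVneq i j) => [->|ne].
  by rewrite h'S // h'j; clear -dj2 dy; lia.
have ij' : i < j by clear -ij ne; lia.
rewrite (h'S i ij) (h'S i.+1 ij').
have a : deg g (h i) <= 2.
  by case: (posnP i) => [->|ip]; [rewrite dh0 | apply: hle; [|apply: ltnW]].
have b : 2 <= deg g (h i.+1).
  case: (eqVneq i.+1 j) => [->|ne']; first by [].
  by rewrite hint //; clear -ij' ne'; lia.
by clear -a b; lia.
Qed.
End ML.


Section Gen2.
Variable T : finType.
Lemma fpth_card (r : rel T) f s : fpth r f s -> s <= #|T|.
Proof.
case=> fi _; have u := uniq_mkseq fi.
by move: (max_card (mem (mkseq f s))); rewrite (card_uniqP u) size_mkseq.
Qed.

Lemma three_elems : 3 <= #|T| -> exists a b c : T, [/\ a != b, a != c & b != c].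
Proof.
move=> h.
have h0 : 0 < #|T| by lia.
have [a _] : exists a : T, true by case/card_gt0P: h0 => a; exists a.
have : 1 < #|[set~ a]| by rewrite cardsC1; lia.
move=> h2; have [b] : exists b, b \in [set~ a] by apply/card_gt0P; lia.
rewrite !inE => ba.
have : 0 < #|[set~ a] :\ b| by move: (cardsD1 b [set~ a]); rewrite !inE ba; lia.
case/card_gt0P=> c; rewrite !inE => /andP[cb ca].
by exists a, b, c; split; rewrite // eq_sym.
Qed.
End Gen2.

Section Iso.
Variable T : finType.
Variable g : rel T.
Variable k : nat.
Hypothesis gs : symmetric g.
Hypothesis gi : irreflexive g.
Hypothesis Hmp : forall p, deg_monotone_path g p -> size p <= k.-1.
Hypothesis Hsat : forall u v, u != v -> ~~ g u v ->
     exists p, deg_monotone_path (add_edge g u v) p /\ k <= size p.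
Hypothesis k4 : 4 <= k.

Lemma Iso u z : deg g u = 0 -> (forall y, g z y -> deg g y <= deg g z) -> 1 <= deg g z -> False.
Proof.
move=> d0 loc dz.
have uz : u != z by apply/eqP=> e; move: dz; rewrite -e d0.
have nuz : ~~ g u z by apply: deg0.
case: (sat_f gs Hsat uz nuz) => f [s [P M ks]].
case: (Gres gs Hmp uz nuz loc ltac:(lia) ltac:(lia) P M ks k4) => j [_ _ _ _ gq].
by move: (deg0 (f j.-1) d0); rewrite gq.
Qed.

Lemma Few : 3 <= #|T| -> (forall x, deg g x <= 1) -> False.
Proof.
move=> n3 d1.
have [u [v [uv nuv]]] : exists u v, u != v /\ ~~ g u v.
  have [a [b [c [ab ac bc]]]] := three_elems n3.
  case: (boolP (g a b)) => gab; last by exists a, b.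
  exists a, c; split => //; apply/negP=> gac.
  have da : deg g a = 1 by move: (deg_pos gab) (d1 a); lia.
  by move: bc; rewrite (deg_nbr1 da gab gac) eqxx.
case: (sat_f gs Hsat uv nuv) => f [s [P M ks]].
have vu : v != u by rewrite eq_sym.
have inuv : forall i, 0 < i -> i <= 3 -> f i = u \/ f i = v.
  move=> i ip i3.
  have d2 : 2 <= deg (add_edge g u v) (f i).
    case: (ltnP i 3) => i3'.
      by apply: (interior2 (add_edge_sym _ _ gs) P ip); clear -i3' ks k4; lia.
    have -> : i = 3 by clear -i3 i3'; lia.
    apply: leq_trans (interior2 (add_edge_sym _ _ gs) P (i := 2) isT _) (M 2 _); clear -ks k4; lia.
  case: (eqVneq (f i) u) => [|fu]; first by left.
  case: (eqVneq (f i) v) => [|fv]; first by right.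
  by move: d2; rewrite deg_add_other // => h; move: (d1 (f i)); clear -h; lia.
case: P => fi _.
have e : forall a b, 0 < a -> a <= 3 -> 0 < b -> b <= 3 -> a != b -> f a != f b.
  move=> a b a0 a3 b0 b3 ab; apply/eqP=> ee.
  have as' : a < s by clear -a3 ks k4; lia.
  have bs' : b < s by clear -b3 ks k4; lia.
  by move: (fi a b as' bs' ee) ab => ->; rewrite eqxx.
case: (inuv 1 isT isT) => e1; case: (inuv 2 isT isT) => e2; case: (inuv 3 isT isT) => e3.
all: first [by move: (e 1 2 isT isT isT isT isT); rewrite e1 e2 eqxx
           |by move: (e 1 3 isT isT isT isT isT); rewrite e1 e3 eqxx
           |by move: (e 2 3 isT isT isT isT isT); rewrite e2 e3 eqxx].
Qed.

Lemma Star z0 : (forall x, x != z0 -> g z0 x /\ deg g x = 1) -> 3 <= #|T| -> False.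
Proof.
move=> H n3.
have [u [u' [uu' uz u'z]]] : exists u u', [/\ u != u', u != z0 & u' != z0].
  have [a [b [c [ab ac bc]]]] := three_elems n3.
  case: (eqVneq a z0) => [az|az]; first by exists b, c; split=> //; rewrite -az eq_sym.
  case: (eqVneq b z0) => [bz|bz]; first by exists a, c; split=> //; rewrite -bz eq_sym.
  by exists a, b.
have [gzu du1] := H u uz.
have [gzu' du1'] := H u' u'z.
have nuu : ~~ g u u'.
  by apply/negP=> h; move: u'z; rewrite (deg_nbr1 du1 (_ : g u z0) h) ?eqxx // gs.
case: (sat_f gs Hsat uu' nuu) => f [s [P M ks]].
have sT := fpth_card P.
have g's := add_edge_sym u u' gs.
set g' := add_edge g u u' in P M g's.
have dz : deg g' z0 = #|T|.-1.
  rewrite /g' deg_add_other 1?eq_sym // /deg -(cardsC1 z0); apply: eq_card => y.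
  rewrite !inE; case: (eqVneq y z0) => [->|yz]; first by rewrite gi.
  by case: (H y yz).
have du : deg g' u = 2 by rewrite /g' deg_add_u // du1.
have du' : deg g' u' = 2 by rewrite /g' deg_add_v // du1'.
have dx : forall x, x != u -> x != u' -> x != z0 -> deg g' x = 1.
  by move=> x xu xu' xz; rewrite /g' deg_add_other //; case: (H x xz).
have high : forall x, 3 <= deg g' x -> x = z0.
  move=> x; case: (eqVneq x u) => [->|xu]; first by rewrite du.
  case: (eqVneq x u') => [->|xu']; first by rewrite du'.
  by case: (eqVneq x z0) => [->|xz] //; rewrite dx.
have two : forall x, 2 <= deg g' x -> [\/ x = u, x = u' | x = z0].
  move=> x; case: (eqVneq x u) => [->|xu]; first by constructor 1.
  case: (eqVneq x u') => [->|xu']; first by constructor 2.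
  by case: (eqVneq x z0) => [->|xz]; [constructor 3 | rewrite dx].
have [fi fa] := P.
have ne : forall a b, a <= 3 -> b <= 3 -> a != b -> f a != f b.
  move=> a b a3 b3 ab; apply/eqP=> ee.
  have as' : a < s by clear -a3 ks k4; lia.
  have bs' : b < s by clear -b3 ks k4; lia.
  by move: (fi a b as' bs' ee) ab => ->; rewrite eqxx.
have i1 : 2 <= deg g' (f 1) by apply: (interior2 g's P); clear -ks k4; lia.
have i2 : 2 <= deg g' (f 2) by apply: (interior2 g's P); clear -ks k4; lia.
have i3 : 2 <= deg g' (f 3) by apply: leq_trans i2 (M 2 _); clear -ks k4; lia.
have dZ : 3 <= deg g' z0 by rewrite dz; clear -sT ks k4; lia.
have nz : forall m, 0 < m -> m <= 2 -> f m != z0.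
  move=> m m0 m2; apply/eqP=> e.
  have : 3 <= deg g' (f m.+1) by rewrite -e in dZ; apply: leq_trans dZ (M m _); clear -m2 ks k4; lia.
  move/high; rewrite -e => /eqP; apply/negP; apply: ne; clear -m2; lia.
have nb : forall y, g' u y -> y = z0 \/ y = u'.
  move=> y; rewrite /g' add_edgeE eqxx /= (negbTE uu') /= orbF => /orP[h|/eqP->]; last by right.
  by left; apply: (deg_nbr1 du1 _ h); rewrite gs.
have nb' : forall y, g' u' y -> y = z0 \/ y = u.
  move=> y; rewrite /g' add_edgeE eqxx [u' == u]eq_sym (negbTE uu') /= => /orP[h|/eqP->]; last by right.
  by left; apply: (deg_nbr1 du1' _ h); rewrite gs.
have f0 : g' (f 1) (f 0) by rewrite g's; apply: fa; clear -ks k4; lia.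
have n12 := ne 1 2 isT isT isT.
have n13 := ne 1 3 isT isT isT.
have n23 := ne 2 3 isT isT isT.
have n01 := ne 0 1 isT isT isT.
have n02 := ne 0 2 isT isT isT.
have n03 := ne 0 3 isT isT isT.
have z1 := nz 1 isT isT.
have z2 := nz 2 isT isT.
case: (two _ i1) => e1; last by move: z1; rewrite e1 eqxx.
- case: (two _ i2) => e2; last by move: z2; rewrite e2 eqxx.
  + by move: n12; rewrite e1 e2 eqxx.
  + case: (two _ i3) => e3; [by move: n13; rewrite e1 e3 eqxx|by move: n23; rewrite e2 e3 eqxx|].
    rewrite e1 in f0; case: (nb _ f0) => e0.
    * by move: n03; rewrite e0 e3 eqxx.
    * by move: n02; rewrite e0 e2 eqxx.
- case: (two _ i2) => e2; last by move: z2; rewrite e2 eqxx.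
  + case: (two _ i3) => e3; [by move: n23; rewrite e2 e3 eqxx|by move: n13; rewrite e1 e3 eqxx|].
    rewrite e1 in f0; case: (nb' _ f0) => e0.
    * by move: n03; rewrite e0 e3 eqxx.
    * by move: n02; rewrite e0 e2 eqxx.
  + by move: n12; rewrite e1 e2 eqxx.
Qed.

End Iso.


Section HS.
Variable T : finType.
Variable g : rel T.
Hypothesis gs : symmetric g.
Hypothesis gi : irreflexive g.

Lemma set2_eq (a b x y : T) : a != b -> x != y ->
  ([set a; b] == [set x; y]) = ((a == x) && (b == y)) || ((a == y) && (b == x)).
Proof.
move=> ab xy; apply/idP/idP.
  move/eqP=> e.
  have ha : a \in [set x; y] by rewrite -e !inE eqxx.
  have hb : b \in [set x; y] by rewrite -e !inE eqxx orbT.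
  move: ha hb; rewrite !inE.
  by case/orP=> /eqP ea; case/orP=> /eqP eb; subst; move: ab xy; rewrite ?eqxx ?orbT.
case/orP=> /andP[/eqP-> /eqP->] //; by rewrite setUC.
Qed.

Lemma handshake : \sum_(x : T) deg g x = 2 * nedges g.
Proof.
have e1 : \sum_(x : T) deg g x = \sum_(p : T * T | g p.1 p.2) 1.
  rewrite -(pair_big_dep xpredT (fun x y => g x y) (fun _ _ => 1)) /=.
  by apply: eq_bigr => x _; rewrite /deg -sum1dep_card.
set E := [set p : {set T} | [exists x, exists y, (x != y) && g x y && (p == [set x; y])]].
rewrite e1 (partition_big (fun p : T * T => [set p.1; p.2]) (fun e => e \in E)); last first.
  move=> [x y] /= gxy; rewrite inE; apply/existsP; exists x; apply/existsP; exists y.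
  by rewrite gxy eqxx !andbT; apply/negP=> /eqP e; move: gxy; rewrite e gi.
have -> : nedges g = #|E| by [].
transitivity (\sum_(e in E) 2); last by rewrite sum_nat_const mulnC.
apply: eq_bigr => ee.
rewrite inE => /existsP[x /existsP[y /andP[/andP[xy gxy] /eqP ->]]].
rewrite sum1dep_card.
have -> : [set p : T * T | g p.1 p.2 && ([set p.1; p.2] == [set x; y])] = [set (x, y); (y, x)].
  apply/setP=> [[a b]]; rewrite !inE /= !xpair_eqE.
  case: (boolP (g a b)) => gab /=.
    have ab : a != b by apply/negP=> /eqP e; move: gab; rewrite e gi.
    by rewrite set2_eq.
  apply/esym/negP=> /orP[] /andP[/eqP ea /eqP eb]; move: gab; rewrite ea eb ?gxy //.
  by rewrite gs gxy.
rewrite cards2; case: eqP => // [[e _]]; by move: xy; rewrite e eqxx.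
Qed.
End HS.


Unset Implicit Arguments.
Set Strict Implicit.

Theorem theorem2p4 (n k : nat) :
  3 <= n -> 4 <= k ->
  forall g : rel 'I_n, simple_graph g -> k_saturated g k -> n <= nedges g.
Proof.
move=> n3 k4 g [gs gi] [Hmp Hsat].
have cT : 3 <= #|'I_n| by rewrite card_ord.
have x0 : 'I_n by exists 0; lia.
case: (boolP [forall x, deg g x <= 1]) => [/forallP d1|].
  by exfalso; apply: (Few gs Hsat k4 cT d1).
rewrite negb_forall => /existsP[x1]; rewrite -ltnNge => dx1.
case: (@arg_maxnP _ x0 xpredT (deg g) isT) => z0 _ hz.
have dz0 : 2 <= deg g z0 by apply: leq_trans dx1 (hz x1 isT).
have loc0 : forall y, g z0 y -> deg g y <= deg g z0 by move=> y _; apply: hz.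
have noiso : forall x, deg g x != 0.
  move=> x; apply/eqP=> d0; apply: (Iso gs Hmp Hsat k4 d0 loc0); lia.
have leafadj : forall u, deg g u = 1 -> g u z0.
  move=> u d1; have : 0 < deg g u by rewrite d1.
  case/card_gt0P=> w; rewrite inE => guw.
  case: (eqVneq w z0) => [<-|wz] //.
  by exfalso; apply: (ML gs gi Hmp Hsat k4 d1 guw loc0 dz0); rewrite eq_sym.
case: (classic (exists y0, g z0 y0 /\ deg g y0 != 1)) => [[y0 [gy0 dy0]]|caseB]; last first.
  exfalso.
  have leaves : forall y, g z0 y -> deg g y = 1.
    by move=> y gy; apply/eqP; apply/negPn/negP=> h; apply: caseB; exists y.
  case: (classic (exists x, x != z0 /\ ~~ g z0 x)) => [[x2 [x2z nx2]]|full]; last first.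
    apply: (Star gs gi Hsat k4 (z0 := z0) _ cT) => x xz.
    have gx : g z0 x by apply/negPn/negP=> h; apply: full; exists x.
    by split=> //; apply: leaves.
  pose P x := (x != z0) && ~~ g z0 x.
  case: (@arg_maxnP _ x2 P (deg g) ltac:(by rewrite /P x2z)) => x3 /andP[x3z nx3] hx3.
  have loc3 : forall y, g x3 y -> deg g y <= deg g x3.
    move=> y gy; apply: hx3; apply/andP; split.
      by apply/eqP=> e; move: nx3; rewrite -e gs gy.
    apply/negP=> gzy.
    have := deg_nbr1 (leaves y gzy) (_ : g y z0) (_ : g y x3).
    by move=> /(_ _ _) e; move: x3z; rewrite e ?eqxx // gs.
  have d3 : 2 <= deg g x3.
    have := noiso x3; case: (ltngtP (deg g x3) 1) => // [|e _]; first by lia.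
    by move: nx3; rewrite gs leafadj.
  have [u [gzu _]] := deg_other x3 dz0.
  by apply: (ML gs gi Hmp Hsat k4 (leaves u gzu) _ loc3 d3 x3z); rewrite gs.
pose L := [set x | deg g x == 1].
have Lsub : #|L| <= (deg g z0).-1.
  have sub : L \subset [set y | g z0 y] :\ y0.
    apply/subsetP=> x; rewrite !inE => /eqP dx.
    apply/andP; split; last by rewrite gs leafadj.
    by apply/eqP=> e; move: dy0; rewrite -e dx.
  apply: leq_trans (subset_leq_card sub) _.
  move: (cardsD1 y0 [set y | g z0 y]); rewrite inE gy0 /deg; lia.
have sumL : \sum_(x : 'I_n) (x \in L : nat) = #|L|.
  by rewrite -sum1_card [in RHS]big_mkcond /=; apply: eq_bigr => x _; case: (x \in L).
have hs := handshake gs gi.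
have lower : deg g z0 + \sum_(x : 'I_n | x != z0) 2 <= \sum_(x : 'I_n) (deg g x + (x \in L)).
  rewrite [X in _ <= X](bigD1 z0) //=; apply: leq_add; first by apply: leq_addr.
  apply: leq_sum => x xz; have := noiso x; rewrite inE.
  case: (eqVneq (deg g x) 1) => [->|d1] //= d0.
  by move: d1 d0; clear; lia.
have tot : \sum_(x : 'I_n) 2 = 2 + \sum_(x : 'I_n | x != z0) 2 by rewrite (bigD1 z0).
have tot2 : \sum_(x : 'I_n) 2 = 2 * n by rewrite big_const_ord iter_addn_0 mulnC.
move: lower; rewrite big_split /= sumL hs => lower.
set S := \sum_(x : 'I_n | x != z0) 2 in lower tot.
rewrite tot2 in tot.
lia.
Qed.
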